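(* Let $\{z_n\}$ be a sequence of non-zero complex numbers with $|z_n|\to\infty$ whose classical exponent of convergence is less than $1$, and let $P(z)=\prod_n(1-z/z_n)$ be its canonical product. Suppose $\{z_n\}$ has finite $\varphi$-exponent of convergence $\lambda\ge0$. Let $\varphi$ and $s$ be differentiable with $\limsup_{r\to\infty}\frac{r^2s'(r)}{s(r)^2}<\infty$, and suppose $$\limsup_{r\to\infty}\frac{\varphi'(s(r))s'(r)r}{\varphi(s(r))}<\frac1\lambda\quad\text{or}\quad\liminf_{r\to\infty}\frac{\varphi'(s(r))s'(r)r}{\varphi(s(r))}\ge\frac1\lambda$$ (with $1/0=\infty$). Let $\varepsilon>0$ and $r_n=|z_n|$. If $z$ lies outside the discs $D_n=\{z:|z-z_n|\le r_n^{-(\lambda+\varepsilon)}\}$, then $$\log\frac{1}{|P(z)|}=O\left(\varphi(s(r))^{\lambda+\varepsilon}\log r\right),\quad |z|=r\to\infty.$$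
   Context: Let $R_0>0$. $\varphi:(R_0,\infty)\to(0,\infty)$ is a non-decreasing unbounded function with $\log r\le\varphi(r)\le r$ for $r\ge R_0$; $s:(R_0,\infty)\to(0,\infty)$ is non-decreasing with $r<s(r)\le r^2$ for $r\ge R_0$ and $\liminf_{r\to\infty}s(r)/r>1$. The $\varphi$-exponent of convergence of $\{z_n\}$ is $\inf\{\mu>0:\sum_n\varphi(|z_n|)^{-\mu}<\infty\}$ ($=\infty$ if the sum diverges for all $\mu>0$). *)

(* Defs.v *)
From HB Require Import structures.
From mathcomp Require Import all_boot all_order all_algebra.
From mathcomp Require Import all_classical all_reals all_analysis.
From mathcomp Require Import complex.
Set Implicit Arguments. Unset Strict Implicit. Unset Printing Implicit Defensive.
Import Order.TTheory GRing.Theory Num.Theory.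
Import numFieldNormedType.Exports.
Local Open Scope classical_set_scope.
Local Open Scope ring_scope.

Definition Cx (R : realType) : numClosedFieldType := R[i].

Definition cabs (R : realType) (x : Cx R) : R :=
  Num.sqrt (complex.Re x ^+ 2 + complex.Im x ^+ 2).

(* Since f is only
   defined on (R0, oo) and |z_n| -> oo, the finitely many terms with
   |z_n| <= R0 are dropped (this does not affect convergence). *)
Definition conv_exps (R : realType) (f : R -> R) (R0 : R) (z : nat -> Cx R)
  : set R :=
  [set mu | 0 < mu /\
     cvgn (series (fun n => if R0 < cabs (z n) then f (cabs (z n)) `^ (- mu)
                           else 0))].

(* f-exponent of convergence: inf of the above set, +oo if it is empty *)
Definition f_exp_conv (R : realType) (f : R -> R) (R0 : R) (z : nat -> Cx R)
  : \bar R :=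
  ereal_inf [set (mu%:E)%E | mu in conv_exps f R0 z].

Definition exp_conv (R : realType) (z : nat -> Cx R) : \bar R :=
  f_exp_conv id 0 z.

Definition canon_prod (R : realType) (z : nat -> Cx R) (w : Cx R) : Cx R :=
  limn (fun N : nat => \prod_(n < N) (1 - w / z n)).

Definition inv_ext (R : realType) (l : R) : \bar R :=
  if l == 0 then +oo%E else (l^-1)%:E.

Definition growth_ratio (R : realType) (phi s : R -> R) (r : R) : R :=
  derive1 phi (s r) * derive1 s r * r / phi (s r).

(* Main.v *)
Require Import Defs.
From HB Require Import structures.
From mathcomp Require Import all_boot all_order all_algebra.
From mathcomp Require Import all_classical all_reals all_analysis.
From mathcomp Require Import complex.
Import Order.TTheory GRing.Theory Num.Theory.
Import numFieldNormedType.Exports.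
Local Open Scope classical_set_scope.
Local Open Scope ring_scope.
Section CA.
Variable R : realType.
Implicit Types x y : Cx R.

Lemma cabsE x : (cabs x)%:C%C = `|x|.
Proof. by rewrite normc_def. Qed.

Lemma cabs_ge0 x : 0 <= cabs x.
Proof. exact: sqrtr_ge0. Qed.

Lemma cabsM x y : cabs (x * y) = cabs x * cabs y.
Proof.
apply: (@complexI R); rewrite rmorphM /= !cabsE; exact: normrM.
Qed.

Lemma cabs_eq0 x : (cabs x == 0) = (x == 0).
Proof.
rewrite -(@normr_eq0 _ _ x) -cabsE. apply/eqP/eqP => [->//|h].
by apply: (@complexI R); rewrite h.
Qed.

Lemma cabs1 : cabs (1 : Cx R) = 1.
Proof. by apply: (@complexI R); rewrite cabsE normr1. Qed.

Lemma cabsV x : cabs (x^-1) = (cabs x)^-1.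
Proof.
have [->|x0] := eqVneq x 0.
  have h0 : cabs (0 : Cx R) = 0 by apply/eqP; rewrite cabs_eq0.
  by rewrite invr0 h0 invr0.
have c0 : cabs x != 0 by rewrite cabs_eq0.
apply: (mulfI c0); rewrite -cabsM divff // mulfV // cabs1 //.
Qed.

Lemma cabsD x y : cabs (x + y) <= cabs x + cabs y.
Proof. by rewrite -lecR rmorphD /= !cabsE ler_normD. Qed.

Lemma cabsN x : cabs (- x) = cabs x.
Proof. by apply: (@complexI R); rewrite !cabsE normrN. Qed.

Lemma cabsB x y : cabs (x - y) = cabs (y - x).
Proof. by rewrite -cabsN opprB. Qed.

Lemma cabs_ReIm x : cabs x <= `|complex.Re x| + `|complex.Im x|.
Proof.
rewrite /cabs; case: x => a b /=.
have h : a ^+ 2 + b ^+ 2 <= (`|a| + `|b|) ^+ 2.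
  rewrite sqrrD !real_normK ?num_real //.
  by rewrite -addrA lerD2l lerDr mulrn_wge0 // mulr_ge0.
apply: le_trans (ler_wsqrtr h) _.
by rewrite sqrtr_sqr ger0_norm // addr_ge0.
Qed.

Lemma cabs_sub_ge x y : cabs x - cabs y <= cabs (x - y).
Proof. by rewrite lerBlDr -{1}(subrK y x) cabsD. Qed.
End CA.
From mathcomp Require Import ring lra.
Section TermEst.
Variable R : realType.

Lemma ln_le_sub1 (a : R) : 0 < a -> ln a <= a - 1.
Proof.
move=> a0; have := @le_ln1Dx R (a - 1).
have -> : 1 + (a - 1) = a by rewrite addrC subrK.
apply; lra.
Qed.

Lemma ln_ge_1sub (a : R) : 0 < a -> 1 - a^-1 <= ln a.
Proof.
move=> a0; have := @ln_le_sub1 a^-1; rewrite invr_gt0 => /(_ a0).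
rewrite lnV ?posrE //; lra.
Qed.

Lemma far_term (r rn a : R) : 0 < rn -> 0 <= r -> 2 * r <= rn ->
  1 - r / rn <= a -> a <= 1 + r / rn -> `|ln a| <= 2 * (r / rn).
Proof.
move=> rn0 r0 h2 ha1 ha2.
have hx : r / rn <= 2^-1.
  by rewrite ler_pdivrMr //; lra.
have hx0 : 0 <= r / rn by rewrite divr_ge0 // ltW.
have a0 : 2^-1 <= a by lra.
have a0' : 0 < a by apply: lt_le_trans a0; rewrite invr_gt0.
have u := @ln_le_sub1 a a0'. have l := @ln_ge_1sub a a0'.
have hinv : 1 - a^-1 >= - 2 * (r / rn).
  have : a^-1 <= 1 + 2 * (r/rn).
    rewrite -[a^-1]mul1r ler_pdivrMr //.
    suff : 0 <= (1 + 2 * (r / rn)) * a - 1 by lra.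
    nra.
  lra.
rewrite ler_norml; apply/andP; split; lra.
Qed.
End TermEst.
Section TermEst2.
Variable R : realType.
Lemma near_term (r rn m alpha a : R) : 0 < m -> m <= rn -> rn <= 2 * r ->
  2 <= r -> 1 <= ln r -> 0 <= alpha -> 0 < a -> a <= 1 + r / rn ->
  rn `^ (- alpha) / rn <= a ->
  `|ln a| <= (2 * (alpha + 1) + 1 + ln (1 + m^-1)) * ln r.
Proof.
move=> m0 mrn rn2r r2 lr1 al0 a0 hau hal.
have rn0 : 0 < rn by apply: lt_le_trans mrn.
have r0 : 0 < r by apply: lt_le_trans r2.
have lm0 : 0 <= ln (1 + m^-1).
  apply: ln_ge0; rewrite lerDl invr_ge0 ltW //.
have m1 : 0 < 1 + m^-1 by rewrite addr_gt0 ?invr_gt0.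
have up : ln a <= ln (1 + m^-1) + ln r.
  rewrite -lnM ?posrE //.
  rewrite ler_ln ?posrE ?mulr_gt0 //.
  apply: (le_trans hau).
  have : r / rn <= r / m by rewrite ler_pM2l // lef_pV2 ?posrE.
  have : r / m = m^-1 * r by rewrite mulrC.
  nra.
have ln2 : ln rn <= 2 * ln r.
  have : ln rn <= ln (2 * r) by rewrite ler_ln ?posrE ?mulr_gt0.
  rewrite lnM ?posrE //.
  have : ln 2 <= ln r by rewrite ler_ln ?posrE.
  lra.
have low : - (alpha + 1) * (2 * ln r) <= ln a.
  have pos : 0 < rn `^ (- alpha) / rn by rewrite divr_gt0 ?powR_gt0.
  apply: le_trans (_ : ln (rn `^ (- alpha) / rn) <= ln a).
    rewrite ln_div ?posrE ?powR_gt0 // ln_powR.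
    have : 0 <= ln r by lra.
    nra.
  by rewrite ler_ln ?posrE.
rewrite ler_norml; apply/andP; split; nra.
Qed.
End TermEst2.
Section Growth.
Variable R : realType.

Lemma is_derive_comp1 (f g : R -> R) x : derivable f x 1 -> derivable g (f x) 1 ->
  is_derive x 1 (g \o f) (derive1 g (f x) * derive1 f x).
Proof.
move=> df dg.
have dgf : derivable (g \o f) x 1.
  apply/derivable1_diffP; apply: differentiable_comp; exact/derivable1_diffP.
rewrite -derive1_comp //. rewrite derive1E. exact: derivableP.
Qed.

Variables (phi s : R -> R) (R0 : R).
Hypothesis hR0 : 0 < R0.
Hypothesis phi_pos : forall r, R0 < r -> 0 < phi r.
Hypothesis s_gt : forall r, R0 < r -> r < s r.
Hypothesis phi_der : forall r, R0 < r -> derivable phi r 1.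
Hypothesis s_der : forall r, R0 < r -> derivable s r 1.

Definition hfun (c : R) (t : R) := ln (phi (s t)) - c * ln t.

Lemma hfun_derive c t : R0 < t ->
  is_derive t 1 (hfun c) ((growth_ratio phi s t - c) / t).
Proof.
move=> t0.
have st : R0 < s t := lt_trans t0 (s_gt _ t0).
have pst := phi_pos _ st.
have t0' : 0 < t := lt_trans hR0 t0.
have d1 : is_derive t 1 (phi \o s) (derive1 phi (s t) * derive1 s t).
  exact: is_derive_comp1 (s_der _ t0) (phi_der _ st).
have d1' : derivable (phi \o s) t 1 by case: d1.
have d2 : is_derive t 1 ((@ln R) \o (phi \o s)) (derive1 (@ln R) (phi (s t)) * derive1 (phi \o s) t).
  apply: is_derive_comp1 => //.
  by case: (is_derive1_ln pst).
have d3 : is_derive t 1 (c *: (@ln R)) (c *: t^-1).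
  apply: is_deriveZ. exact: is_derive1_ln.
have d4 := is_deriveB d2 d3.
have -> : hfun c = ((@ln R) \o (phi \o s)) - c *: (@ln R) by apply/funext => y.
apply: trigger_derive d4 _.
have e1 : derive1 (@ln R) (phi (s t)) = (phi (s t))^-1.
  rewrite derive1E. by case: (is_derive1_ln pst).
have e2 : derive1 (phi \o s) t = derive1 phi (s t) * derive1 s t.
  rewrite derive1E. by case: d1.
rewrite e1 e2 /growth_ratio.
rewrite /GRing.scale /=.
field. by apply/andP; split; apply: lt0r_neq0.
Qed.
End Growth.
Arguments hfun {R}.
Section Growth2.
Variable R : realType.
Variables (phi s : R -> R) (R0 : R).
Hypothesis hR0 : 0 < R0.
Hypothesis phi_pos : forall r, R0 < r -> 0 < phi r.
Hypothesis s_gt : forall r, R0 < r -> r < s r.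
Hypothesis phi_der : forall r, R0 < r -> derivable phi r 1.
Hypothesis s_der : forall r, R0 < r -> derivable s r 1.

Let hd c t (t0 : R0 < t) := @hfun_derive R phi s R0 hR0 phi_pos s_gt phi_der s_der c t t0.

Lemma hfun_nincr c a : R0 < a -> (forall t, a < t -> growth_ratio phi s t <= c) ->
  forall x y, a <= x -> x <= y -> hfun phi s c y <= hfun phi s c x.
Proof.
move=> a0 hc x y ax xy.
have xR : R0 < x := lt_le_trans a0 ax.
apply: (@ler0_derive1_nincr _ _ x y) => //.
- move=> t; rewrite in_itv /= => /andP[xt _].
  by case: (hd c _ (lt_trans xR xt)).
- move=> t; rewrite in_itv /= => /andP[xt _].
  have tR : R0 < t := lt_trans xR xt.
  rewrite derive1E; case: (hd c _ tR) => _ ->.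
  rewrite pmulr_lle0 ?invr_gt0 ?(lt_trans hR0 tR) // subr_le0.
  by apply: hc; apply: le_lt_trans ax xt.
- apply: derivable_within_continuous => t; rewrite in_itv /= => /andP[xt _].
  by case: (hd c _ (lt_le_trans xR xt)).
Qed.

Lemma hfun_ndecr c a : R0 < a -> (forall t, a < t -> c <= growth_ratio phi s t) ->
  forall x y, a <= x -> x <= y -> hfun phi s c x <= hfun phi s c y.
Proof.
move=> a0 hc x y ax xy.
have xR : R0 < x := lt_le_trans a0 ax.
apply: (@ger0_derive1_ndecr _ _ x y) => //.
- move=> t; rewrite in_itv /= => /andP[xt _].
  by case: (hd c _ (lt_trans xR xt)).
- move=> t; rewrite in_itv /= => /andP[xt _].
  have tR : R0 < t := lt_trans xR xt.
  rewrite derive1E; case: (hd c _ tR) => _ ->.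
  rewrite divr_ge0 ?subr_ge0 ?(ltW (lt_trans hR0 tR)) //.
  by apply: hc; apply: le_lt_trans ax xt.
- apply: derivable_within_continuous => t; rewrite in_itv /= => /andP[xt _].
  by case: (hd c _ (lt_le_trans xR xt)).
Qed.
End Growth2.
Section Lim.
Variable R : realType.
Implicit Types x y : Cx R.

Lemma Re_le_cabs x : `|complex.Re x| <= cabs x.
Proof.
rewrite /cabs; case: x => a b /=.
rewrite -sqrtr_sqr; apply: ler_wsqrtr; rewrite lerDl; exact: sqr_ge0.
Qed.

Lemma Im_le_cabs x : `|complex.Im x| <= cabs x.
Proof.
rewrite /cabs; case: x => a b /=.
rewrite -sqrtr_sqr; apply: ler_wsqrtr; rewrite lerDr; exact: sqr_ge0.
Qed.

Lemma ReB x y : complex.Re (x - y) = complex.Re x - complex.Re y.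
Proof. by case: x; case: y. Qed.
Lemma ImB x y : complex.Im (x - y) = complex.Im x - complex.Im y.
Proof. by case: x; case: y. Qed.

Lemma telescope_real (u : nat -> R) (d : nat -> R) :
  (forall N, d N = u N.+1 - u N) -> forall N, u N = u 0%N + series d N.
Proof.
move=> hd; elim=> [|N IH]; first by rewrite /series /= big_geq // addr0.
rewrite /series /= big_nat_recr //= -/(series d N).
by rewrite addrA -IH hd addrC subrK.
Qed.

Lemma real_seq_lim (u : nat -> R) (d : nat -> R) :
  (forall N, `|u N.+1 - u N| <= d N) -> cvgn (series d) ->
  exists L, forall e, 0 < e -> \forall N \near \oo, `|L - u N| < e.
Proof.
move=> hud cd.
set dd := fun N => u N.+1 - u N.
have cdd : cvgn (series dd).
  apply: normed_cvg.
  apply: (@series_le_cvg _ _ d) => //.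
  - move=> n; exact: normr_ge0.
  - move=> n; exact: le_trans (normr_ge0 _) (hud n).
have hu := @telescope_real u dd (fun N => erefl).
exists (u 0%N + limn (series dd)) => e e0.
have := cdd; move/cvgrPdist_lt => /(_ e e0).
apply: filterS => N hN.
rewrite (hu N); suff -> : u 0%N + limn (series dd) - (u 0%N + series dd N) = limn (series dd) - series dd N by [].
by rewrite opprD addrACA subrr add0r.
Qed.
End Lim.
Section Lim2.
Variable R : realType.

Lemma cplx_seq_lim (p : nat -> Cx R) (d : nat -> R) :
  (forall N, cabs (p N.+1 - p N) <= d N) -> cvgn (series d) ->
  exists l, p @ \oo --> l /\
    (forall e, 0 < e -> \forall N \near \oo, cabs (l - p N) < e).
Proof.
move=> hd cd.
have hRe : forall N, `|complex.Re (p N.+1) - complex.Re (p N)| <= d N.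
  by move=> N; rewrite -ReB; apply: le_trans (Re_le_cabs _ _) (hd N).
have hIm : forall N, `|complex.Im (p N.+1) - complex.Im (p N)| <= d N.
  by move=> N; rewrite -ImB; apply: le_trans (Im_le_cabs _ _) (hd N).
have [Lr hLr] := @real_seq_lim R (fun N => complex.Re (p N)) d hRe cd.
have [Li hLi] := @real_seq_lim R (fun N => complex.Im (p N)) d hIm cd.
have key : forall e, 0 < e -> \forall N \near \oo, cabs ((Lr +i* Li)%C - p N) < e.
  move=> e e0.
  have e20 : 0 < e / 2 by rewrite divr_gt0.
  have h1 := hLr _ e20. have h2 := hLi _ e20.
  near=> N.
  apply: le_lt_trans (cabs_ReIm _ _) _.
  rewrite ReB ImB /=.
  have a1 : `|Lr - complex.Re (p N)| < e / 2 by near: N.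
  have a2 : `|Li - complex.Im (p N)| < e / 2 by near: N.
  by rewrite [e]splitr ltrD.
exists (Lr +i* Li)%C; split => //.
apply/cvgrPdist_lt => eps.
case: eps => a b; rewrite ltcE /= => /andP[/eqP -> a0].
apply: filterS (key _ a0) => N hN.
by rewrite -cabsE ltcE /= eqxx hN.
Unshelve. all: by end_near.
Qed.
End Lim2.
Section Assembly.
Variable R : realType.
Variable z : nat -> Cx R.

Lemma cabs_prod (F : nat -> Cx R) N :
  cabs (\prod_(n < N) F n) = \prod_(n < N) cabs (F n).
Proof.
elim: N => [|N IH]; first by rewrite !big_ord0 cabs1.
by rewrite !big_ord_recr /= cabsM IH.
Qed.

Lemma ln_prod (a : nat -> R) N : (forall n, 0 < a n) ->
  ln (\prod_(n < N) a n) = \sum_(n < N) ln (a n).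
Proof.
move=> a0; elim: N => [|N IH]; first by rewrite !big_ord0 ln1.
rewrite !big_ord_recr /= lnM ?IH // posrE //.
by apply: prodr_gt0 => i _.
Qed.

Variables (m alpha G : R) (v : nat -> R) (w : Cx R).
Hypothesis z_nz : forall n, z n != 0.
Hypothesis m0 : 0 < m.
Hypothesis zm : forall n, m <= cabs (z n).
Hypothesis zinv : cvgn (series (fun n => (cabs (z n))^-1)).
Hypothesis al0 : 0 <= alpha.
Hypothesis r2 : 2 <= cabs w.
Hypothesis lr1 : 1 <= ln (cabs w).
Hypothesis disc : forall n, cabs (z n) `^ (- alpha) < cabs (w - z n).
Hypothesis G0 : 0 <= G.
Hypothesis v0 : forall n, 0 <= v n.
Hypothesis cv : cvgn (series v).
Hypothesis hnear : forall n, cabs (z n) <= 2 * cabs w -> 1 <= G * v n.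
Hypothesis hfar : forall n, 2 * cabs w <= cabs (z n) -> cabs w / cabs (z n) <= G * v n.

Let r := cabs w.
Let K0 := 2 * (alpha + 1) + 1 + ln (1 + m^-1).

Lemma K0_ge2 : 2 <= K0.
Proof.
have : 0 <= ln (1 + m^-1) by apply: ln_ge0; rewrite lerDl invr_ge0 ltW.
move: al0; rewrite /K0; lra.
Qed.

Lemma term_id n : cabs (1 - w / z n) = cabs (z n - w) / cabs (z n).
Proof.
have -> : 1 - w / z n = (z n - w) / z n.
  by rewrite mulrBl divff.
by rewrite cabsM cabsV.
Qed.

Lemma term_pos n : 0 < cabs (1 - w / z n).
Proof.
rewrite term_id divr_gt0 //; last by apply: lt_le_trans (zm n).
rewrite cabsB; apply: le_lt_trans (disc n); exact: powR_ge0.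
Qed.

Lemma term_bound n : `|ln (cabs (1 - w / z n))| <= K0 * ln r * (G * v n).
Proof.
have rn0 : 0 < cabs (z n) by apply: lt_le_trans (zm n).
have r0 : 0 <= r by apply: cabs_ge0.
have Gv0 : 0 <= G * v n by rewrite mulr_ge0.
have lr0 : 0 <= ln r by apply: le_trans lr1.
have up : cabs (1 - w / z n) <= 1 + r / cabs (z n).
  rewrite term_id ler_pdivrMr // mulrDl mul1r divfK ?gt_eqF //.
  by apply: le_trans (cabsD _ _ _) _; rewrite cabsN.
have low : 1 - r / cabs (z n) <= cabs (1 - w / z n).
  rewrite term_id ler_pdivlMr // mulrBl mul1r divfK ?gt_eqF //.
  exact: cabs_sub_ge.
have := K0_ge2 => hK.
case: (lerP (2 * r) (cabs (z n))) => hc.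
- have h1 := @far_term R r (cabs (z n)) _ rn0 r0 hc low up.
  apply: le_trans h1 _.
  have h2 := hfar _ hc; rewrite -/r in h2.
  have : 2 * (r / cabs (z n)) <= K0 * (G * v n) by nra.
  have : K0 * (G * v n) <= K0 * ln r * (G * v n).
    rewrite -mulrA ler_pM2l; last by lra.
    by rewrite ler_peMl.
  lra.
- have hn : cabs (z n) <= 2 * r by apply: ltW.
  have h1 := @near_term R r (cabs (z n)) m alpha _ m0 (zm n) hn r2 lr1 al0 (term_pos n) up.
  have hl : cabs (z n) `^ (- alpha) / cabs (z n) <= cabs (1 - w / z n).
    rewrite term_id ler_pM2r ?invr_gt0 // cabsB; exact: ltW.
  apply: le_trans (h1 hl) _.
  rewrite -/K0 ler_peMr // ?(hnear _ hn) //.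
  by rewrite mulr_ge0 //; lra.
Qed.

Let B := K0 * ln r * G * limn (series v).
Let p N := \prod_(n < N) (1 - w / z n).

Lemma B_ge0 : 0 <= B.
Proof.
have hK := K0_ge2.
rewrite /B !mulr_ge0 //; first by lra.
- by apply: le_trans lr1.
- have := @nondecreasing_cvgn_le _ (series v) _ cv 0%N.
  rewrite /series /= big_geq //; apply.
  apply: nondecreasing_series => n _ _; exact: v0.
Qed.

Lemma lnp_bound N : `|ln (cabs (p N))| <= B.
Proof.
rewrite /p (@cabs_prod (fun n => 1 - w / z n)) (@ln_prod (fun n => cabs (1 - w / z n))); last by move=> n; exact: term_pos.
apply: le_trans (ler_norm_sum _ _ _) _.
apply: le_trans (ler_sum _ (fun (i : 'I_N) _ => term_bound i)) _.
rewrite -mulr_sumr /B -mulrA ler_wpM2l //.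
  have := K0_ge2; have : 0 <= ln r by apply: le_trans lr1.
  move=> ? ?; apply: mulr_ge0 => //; lra.
rewrite -mulr_sumr ler_wpM2l //.
have -> : \sum_(i < N) v i = series v N by rewrite /series /= big_mkord.
apply: nondecreasing_cvgn_le => //.
apply: nondecreasing_series => n _ _; exact: v0.
Qed.

Lemma p_pos N : 0 < cabs (p N).
Proof. by rewrite /p (@cabs_prod (fun n => 1 - w / z n)); apply: prodr_gt0 => i _; exact: term_pos. Qed.

Lemma p_bounds N : expR (- B) <= cabs (p N) <= expR B.
Proof.
have h := lnp_bound N; rewrite ler_norml in h; case/andP: h => h1 h2.
rewrite -(lnK (p_pos N)) !ler_expR h1 h2 //.
Qed.

Lemma p_step N : cabs (p N.+1 - p N) <= expR B * r * (cabs (z N))^-1.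
Proof.
have -> : p N.+1 - p N = p N * (- (w / z N)).
  by rewrite /p big_ord_recr /= mulrBr mulr1 addrC addrA addNr add0r mulrN.
rewrite cabsM cabsN cabsM cabsV -/r mulrA ler_wpM2r ?invr_ge0 ?cabs_ge0 //.
rewrite ler_wpM2r ?cabs_ge0 //.
by case/andP: (p_bounds N).
Qed.

Lemma canon_prod_bound : `|ln (cabs (canon_prod z w))^-1| <= B.
Proof.
have cd : cvgn (series (fun N => expR B * r * (cabs (z N))^-1)).
  have -> : (fun N => expR B * r * (cabs (z N))^-1) =
            (expR B * r) *: (fun N => (cabs (z N))^-1) by apply/funext.
  exact: is_cvg_seriesZ.
have [l [pl hl]] := @cplx_seq_lim R p _ p_step cd.
have -> : canon_prod z w = l by apply: cvg_lim.
have lo : expR (- B) <= cabs l.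
  rewrite leNgt; apply/negP => hlt.
  have e0 : 0 < expR (- B) - cabs l by rewrite subr_gt0.
  case: (hl _ e0) => N0 _ HN.
  have := HN N0 (leqnn N0) => /= hN.
  have := p_bounds N0; case/andP => h2 _.
  have : cabs (p N0) - cabs l < expR (- B) - cabs l.
    apply: le_lt_trans hN; rewrite cabsB.
    exact: cabs_sub_ge.
  lra.
have hi : cabs l <= expR B.
  rewrite leNgt; apply/negP => hlt.
  have e0 : 0 < cabs l - expR B by rewrite subr_gt0.
  case: (hl _ e0) => N0 _ HN.
  have := HN N0 (leqnn N0) => /= hN.
  have := p_bounds N0; case/andP => _ h2.
  have : cabs l - cabs (p N0) < cabs l - expR B.
    apply: le_lt_trans hN.
    exact: cabs_sub_ge.
  lra.
have l0 : 0 < cabs l by apply: lt_le_trans lo; exact: expR_gt0.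
rewrite lnV ?posrE // normrN ler_norml.
rewrite -(ler_expR) -(ler_expR (ln _)) lnK ?posrE // lo hi //.
Qed.
End Assembly.
Set Implicit Arguments. Unset Strict Implicit.
Definition WeightsOK (R : realType) (phi s : R -> R) (z : nat -> Cx R) (alpha : R) :=
  exists (G : R -> R) (v : nat -> R) (C' a' : R),
  [/\ (forall n, 0 <= v n), cvgn (series v), 0 <= C' &
  forall r, a' <= r -> [/\ 0 <= G r, G r <= C' * phi (s r) `^ alpha,
   (forall n, cabs (z n) <= 2 * r -> 1 <= G r * v n) &
   (forall n, 2 * r <= cabs (z n) -> r / cabs (z n) <= G r * v n)]].

Lemma expR1_ge2 (R : realType) : 2 <= expR (1 : R).
Proof. by have := @expR_ge1Dx R 1. Qed.
Lemma min_bound (R : realType) (z : nat -> Cx R) :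
  (forall n, z n != 0) -> (fun n => cabs (z n)) @ \oo --> +oo ->
  exists m, 0 < m /\ forall n, m <= cabs (z n).
Proof.
move=> znz /cvgryPge /(_ 1); case=> N _ HN.
have fin : forall K, exists m, 0 < m /\ forall n, (n < K)%N -> m <= cabs (z n).
  elim=> [|K [m [m0 hm]]]; first by exists 1.
  have zK : 0 < cabs (z K).
    by rewrite lt_def cabs_eq0 znz cabs_ge0.
  exists (Num.min m (cabs (z K))); split; first by rewrite lt_min m0 zK.
  move=> n; rewrite ltnS leq_eqVlt => /orP[/eqP ->|hn].
    by rewrite ge_min lexx orbT.
  by rewrite ge_min hm.
have [m [m0 hm]] := fin N.
exists (Num.min m 1); split; first by rewrite lt_min m0 ltr01.
move=> n; case: (ltnP n N) => hn.
  by rewrite ge_min hm.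
by rewrite ge_min (HN n hn) orbT.
Qed.
Lemma powR_exp (R : realType) (x p : R) : 0 < x -> x `^ p = expR (p * ln x).
Proof. by move=> x0; rewrite /powR gt_eqF. Qed.

Lemma inv_exp (R : realType) (x : R) : 0 < x -> x^-1 = expR (- ln x).
Proof. by move=> x0; rewrite expRN lnK. Qed.

Lemma cabs_gt0 (R : realType) (x : Cx R) : x != 0 -> 0 < cabs x.
Proof. by move=> x0; rewrite lt_def cabs_eq0 x0 cabs_ge0. Qed.

Lemma get_rho (R : realType) (z : nat -> Cx R) :
  (forall n, z n != 0) -> (exp_conv z < 1%:E)%E ->
  exists rho, [/\ 0 < rho, rho < 1 &
    cvgn (series (fun n => cabs (z n) `^ (- rho)))].
Proof.
move=> znz /ereal_inf_lt [_ [mu [mu0 cmu] <-]]; rewrite lte_fin => mu1.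
exists mu; split => //.
suff -> : (fun n => cabs (z n) `^ (- mu)) =
   (fun n => if 0 < cabs (z n) then id (cabs (z n)) `^ (- mu) else 0) by [].
by apply/funext => n; rewrite cabs_gt0.
Qed.

Lemma zinv_cvg (R : realType) (z : nat -> Cx R) (m : R) :
  (forall n, z n != 0) ->
  0 < m -> (forall n, m <= cabs (z n)) -> (exp_conv z < 1%:E)%E ->
  cvgn (series (fun n => (cabs (z n))^-1)).
Proof.
move=> znz m0 zm ze.
have [rho [rho0 rho1 crho]] := get_rho znz ze.
apply: (@series_le_cvg _ _ (fun n => m `^ (rho - 1) * cabs (z n) `^ (- rho))).
- by move=> n; rewrite invr_ge0 cabs_ge0.
- by move=> n; rewrite /= mulr_ge0 // powR_ge0.
- move=> n /=.
  have rn0 := cabs_gt0 (znz n).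
  have e1 : cabs (z n) `^ (- rho) = expR (- rho * ln (cabs (z n))) := powR_exp _ rn0.
  have e2 : m `^ (rho - 1) = expR ((rho - 1) * ln m) := powR_exp _ m0.
  rewrite inv_exp // e1 e2 -expRD ler_expR.
  have : ln m <= ln (cabs (z n)) by rewrite ler_ln ?posrE.
  nra.
- have -> : (fun n => m `^ (rho - 1) * cabs (z n) `^ (- rho)) =
     (m `^ (rho - 1)) *: (fun n => cabs (z n) `^ (- rho)) by apply/funext.
  exact: is_cvg_seriesZ.
Qed.
Lemma near_pinfty_ex (R : realType) (P : R -> Prop) :
  (\forall r \near +oo, P r) -> exists M : R, forall r, M < r -> P r.
Proof. by case=> M [_ HM]; exists M. Qed.

Lemma weightsB (R : realType) (R0 : R) (phi s : R -> R) (z : nat -> Cx R) (lambda eps : R)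
  (hR0 : 0 < R0)
  (phi_pos : forall r, R0 < r -> 0 < phi r)
  (s_gt : forall r, R0 < r -> r < s r)
  (phi_der : forall r, R0 < r -> derivable phi r 1)
  (s_der : forall r, R0 < r -> derivable s r 1)
  (z_nz : forall n, z n != 0)
  (z_exp : (exp_conv z < 1%:E)%E)
  (hlambda0 : 0 <= lambda) (heps : 0 < eps)
  (HB : forall c : R, (c%:E < inv_ext lambda)%E ->
         \forall r \near +oo, c <= growth_ratio phi s r) :
  WeightsOK phi s z (lambda + eps).
Proof.
have [rho [rho0 rho1 crho]] := get_rho z_nz z_exp.
set L := lambda + eps.
have L0 : 0 < L by rewrite /L; lra.
set c := rho / L.
have cL : forall x, L * (c * x) = rho * x.
  by move=> x; rewrite /c; field; rewrite gt_eqF.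
have hc : (c%:E < inv_ext lambda)%E.
  rewrite /inv_ext; case: eqP => [_|l0]; first exact: ltry.
  rewrite lte_fin.
  have lam0 : 0 < lambda by rewrite lt_def; apply/andP; split => //; apply/eqP.
  have : c * lambda < 1.
    have := cL 1; rewrite !mulr1 /L => e.
    have c0 : 0 < c by rewrite /c divr_gt0.
    nra.
  move=> h; rewrite -(ltr_pM2r lam0) mulVf ?gt_eqF //.
have [M HM] := near_pinfty_ex (HB c hc).
set a := `|M| + R0 + 1.
have hMa : M <= `|M| by apply: ler_norm.
have hM0 : 0 <= `|M| by apply: normr_ge0.
have aM : M < a by rewrite /a; lra.
have aR0 : R0 < a by rewrite /a; lra.
have a1 : 1 <= a by rewrite /a; lra.
have hmono := @hfun_ndecr R phi s R0 hR0 phi_pos s_gt phi_der s_der c a aR0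
  (fun t (ht : a < t) => HM t (lt_trans aM ht)).
have e2 : (2 : R) = expR (ln 2) by rewrite lnK // posrE.
have ln20 : 0 <= ln (2 : R) by apply: ln_ge0; lra.
exists (fun r => 2 * r `^ rho), (fun n => cabs (z n) `^ (- rho)),
  (2 * expR (rho * ln a - L * ln (phi (s a)))), a.
split.
- by move=> n; apply: powR_ge0.
- exact: crho.
- by rewrite mulr_ge0 // ltW // expR_gt0.
move=> r ar.
have r0 : 0 < r by lra.
have rR0 : R0 < r by lra.
have sR0 : R0 < s r by apply: lt_trans (s_gt _ rR0).
have psr := phi_pos _ sR0.
have er : r `^ rho = expR (rho * ln r) := powR_exp _ r0.
split.
- by rewrite mulr_ge0 // powR_ge0.
- have ep : phi (s r) `^ L = expR (L * ln (phi (s r))) := powR_exp _ psr.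
  rewrite er ep -mulrA ler_pM2l // -expRD ler_expR.
  have h := hmono a r (lexx a) ar; rewrite /hfun in h.
  have h' := ler_wpM2l (ltW L0) h.
  rewrite !mulrBr !cL in h'.
  lra.
- move=> n hn.
  have rn0 := cabs_gt0 (z_nz n).
  have ev : cabs (z n) `^ (- rho) = expR (- rho * ln (cabs (z n))) := powR_exp _ rn0.
  rewrite er ev e2 -!expRD -[X in X <= _]expR0 ler_expR.
  have : ln (cabs (z n)) <= ln 2 + ln r.
    by rewrite -lnM ?posrE // ler_ln ?posrE // mulr_gt0.
  nra.
- move=> n hn.
  have rn0 := cabs_gt0 (z_nz n).
  have ev : cabs (z n) `^ (- rho) = expR (- rho * ln (cabs (z n))) := powR_exp _ rn0.
  rewrite er ev e2 -!expRD.
  rewrite -[r / _]lnK ?posrE ?divr_gt0 // ler_expR ln_div ?posrE //.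
  have : ln r <= ln (cabs (z n)).
    rewrite ler_ln ?posrE //; lra.
  nra.
Qed.
Lemma weightsA (R : realType) (R0 : R) (phi s : R -> R) (z : nat -> Cx R) (lambda eps : R)
  (hR0 : 0 < R0)
  (phi_pos : forall r, R0 < r -> 0 < phi r)
  (phi_nd : forall r1 r2, R0 < r1 -> r1 <= r2 -> phi r1 <= phi r2)
  (phi_bounds : forall r, R0 < r -> ln r <= phi r /\ phi r <= r)
  (s_gt : forall r, R0 < r -> r < s r)
  (phi_der : forall r, R0 < r -> derivable phi r 1)
  (s_der : forall r, R0 < r -> derivable s r 1)
  (z_inf : (fun n => cabs (z n)) @ \oo --> +oo)
  (hlambda0 : 0 <= lambda)
  (hlambda : f_exp_conv phi R0 z = lambda%:E)
  (heps : 0 < eps)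
  (HA : exists c : R, (c%:E < inv_ext lambda)%E /\
         \forall r \near +oo, growth_ratio phi s r <= c) :
  WeightsOK phi s z (lambda + eps).
Proof.
case: HA => c [hc /near_pinfty_ex [M HM]].
have [c' [c'0 cc' c'l]] : exists c', [/\ 0 <= c', c <= c' & c' * lambda < 1].
  case: (lerP c 0) => c0; first by exists 0; rewrite mul0r.
  exists c; split => //; first exact: ltW.
  move: hc; rewrite /inv_ext; case: eqP => [->|l0]; first by rewrite mulr0.
  have lam0 : 0 < lambda by rewrite lt_def; apply/andP; split => //; apply/eqP.
  rewrite lte_fin => h; rewrite -(ltr_pM2r lam0) in h.
  by rewrite mulVf ?gt_eqF in h.
set q := (1 - c' * lambda) / (c' + 1).
have q0 : 0 < q by rewrite /q divr_gt0 //; lra.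
have qe : q * (c' + 1) = 1 - c' * lambda by rewrite /q divfK // gt_eqF //; lra.
set d := Num.min eps q.
have d0 : 0 < d by rewrite lt_min heps q0.
have de : d <= eps by rewrite ge_min lexx.
have dq : d <= q by rewrite ge_min lexx orbT.
have : (ereal_inf [set (mu%:E)%E | mu in conv_exps phi R0 z] < (lambda + d)%:E)%E.
  by move: hlambda; rewrite /f_exp_conv => ->; rewrite lte_fin; lra.
case/ereal_inf_lt => _ [mu [mu0 cmu] <-]; rewrite lte_fin => mud.
have muL : mu <= lambda + eps by lra.
have cmu1 : c' * mu <= 1.
  have : c' * d <= c' * q by rewrite ler_wpM2l.
  nra.
move: z_inf => /cvgryPge /(_ (R0 + 1)); case=> N0 _ HN0.
have zR0 : forall n, (N0 <= n)%N -> R0 < cabs (z n).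
  by move=> n hn; have := HN0 n hn; lra.
set v := fun n => if (n < N0)%N then 1 else phi (cabs (z n)) `^ (- mu).
have cv : cvgn (series v).
  rewrite -(is_cvg_series_restrict N0).
  move: cmu; rewrite -(is_cvg_series_restrict N0).
  suff -> : (fun n => \sum_(N0 <= k < n)
       (if R0 < cabs (z k) then phi (cabs (z k)) `^ (- mu) else 0)) =
     (fun n => \sum_(N0 <= k < n) v k) by [].
  apply/funext => n; apply: eq_big_nat => k /andP[hk _].
  by rewrite /v ltnNge hk /= zR0.
set a := `|M| + R0 + expR 1.
have hMa : M <= `|M| by apply: ler_norm.
have hM0 : 0 <= `|M| by apply: normr_ge0.
have e1 : 2 <= expR (1 : R) := expR1_ge2 R.
have aM : M < a by rewrite /a; lra.
have aR0 : R0 < a by rewrite /a; lra.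
have ae : expR 1 <= a by rewrite /a; lra.
have hmono := @hfun_nincr R phi s R0 hR0 phi_pos s_gt phi_der s_der c' a aR0
  (fun t (ht : a < t) => le_trans (HM t (lt_trans aM ht)) cc').
have ln20 : 0 <= ln (2 : R) by apply: ln_ge0; lra.
set L := lambda + eps.
exists (fun r => expR (c' * mu * ln 2 + mu * ln (phi (s r)))), v,
  (expR (c' * mu * ln 2)), a.
split.
- move=> n; rewrite /v; case: ifP => _ //; exact: powR_ge0.
- exact: cv.
- exact: ltW (expR_gt0 _).
move=> r ar.
have r0 : 0 < r by lra.
have rR0 : R0 < r by lra.
have lr1 : 1 <= ln r by rewrite -ler_expR lnK ?posrE //; lra.
have sR0 : R0 < s r by apply: lt_trans (s_gt _ rR0).
have psr := phi_pos _ sR0.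
have lp0 : 0 <= ln (phi (s r)).
  apply: ln_ge0.
  have [h1 _] := phi_bounds _ sR0.
  have : ln r <= ln (s r) by rewrite ler_ln ?posrE ?(lt_trans r0 (s_gt _ rR0)) // ltW // s_gt.
  lra.
have G1 : 1 <= expR (c' * mu * ln 2 + mu * ln (phi (s r))).
  rewrite -[X in X <= _]expR0 ler_expR.
  have : 0 <= c' * mu by rewrite mulr_ge0 // ltW.
  have : 0 <= mu * ln (phi (s r)) by rewrite mulr_ge0 // ltW.
  nra.
split.
- exact: ltW (expR_gt0 _).
- have ep : phi (s r) `^ L = expR (L * ln (phi (s r))) := powR_exp _ psr.
  rewrite ep -expRD ler_expR.
  have : mu * ln (phi (s r)) <= L * ln (phi (s r)) by rewrite ler_wpM2r.
  lra.
- move=> n hn; rewrite /v; case: ifP => hN; first by rewrite mulr1.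
  have hn0 : (N0 <= n)%N by rewrite leqNgt hN.
  have rnR0 := zR0 _ hn0.
  have prn := phi_pos _ rnR0.
  have ev : phi (cabs (z n)) `^ (- mu) = expR (- mu * ln (phi (cabs (z n)))) := powR_exp _ prn.
  rewrite ev -expRD -[X in X <= _]expR0 ler_expR.
  have r2R0 : R0 < 2 * r by lra.
  have s2 : R0 < s (2 * r) by apply: lt_trans (s_gt _ r2R0).
  have hp : phi (cabs (z n)) <= phi (s (2 * r)).
    apply: le_trans (phi_nd _ _ rnR0 hn) _.
    by apply: phi_nd => //; apply: ltW; apply: s_gt.
  have hl : ln (phi (cabs (z n))) <= ln (phi (s (2 * r))).
    by rewrite ler_ln ?posrE // phi_pos.
  have hm := hmono r (2 * r) ar (ltW (_ : r < 2 * r)); rewrite /hfun in hm.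
  have l2r : ln (2 * r) = ln 2 + ln r by rewrite lnM ?posrE.
  rewrite l2r in hm.
  have : mu * ln (phi (cabs (z n))) <= mu * (ln (phi (s r)) + c' * ln 2).
    rewrite ler_wpM2l ?(ltW mu0) //.
    lra.
  nra.
- move=> n hn.
  have rn0' : 0 < cabs (z n) by lra.
  rewrite /v; case: ifP => hN.
    rewrite mulr1; apply: le_trans G1.
    by rewrite ler_pdivrMr // mul1r; lra.
  have hn0 : (N0 <= n)%N by rewrite leqNgt hN.
  have rnR0 := zR0 _ hn0.
  have prn := phi_pos _ rnR0.
  have rn0 : 0 < cabs (z n) by lra.
  have ev : phi (cabs (z n)) `^ (- mu) = expR (- mu * ln (phi (cabs (z n)))) := powR_exp _ prn.
  rewrite ev -expRD.
  rewrite -[r / _]lnK ?posrE ?divr_gt0 // ler_expR ln_div ?posrE //.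
  have srn : R0 < s (cabs (z n)) by apply: lt_trans (s_gt _ rnR0).
  have hp : phi (cabs (z n)) <= phi (s (cabs (z n))).
    by apply: phi_nd => //; apply: ltW; apply: s_gt.
  have hl : ln (phi (cabs (z n))) <= ln (phi (s (cabs (z n)))).
    by rewrite ler_ln ?posrE // phi_pos.
  have hm := hmono r (cabs (z n)) ar (_ : r <= cabs (z n)); rewrite /hfun in hm.
  have D0 : ln r <= ln (cabs (z n)) by rewrite ler_ln ?posrE //; lra.
  have h1 : mu * ln (phi (cabs (z n))) <=
            mu * (ln (phi (s r)) + c' * (ln (cabs (z n)) - ln r)).
    rewrite ler_wpM2l ?(ltW mu0) //; lra.
  have h2 : 0 <= (1 - c' * mu) * (ln (cabs (z n)) - ln r).
    by rewrite mulr_ge0 //; lra.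
  have h3 : 0 <= c' * mu * ln 2 by rewrite mulr_ge0 // mulr_ge0 // ltW.
  nra.
Qed.
Theorem lemma4p5 (R : realType) (R0 : R) (phi s : R -> R)
  (z : nat -> Cx R) (lambda : R)
  (* standing assumptions on phi *)
  (hR0 : 0 < R0)
  (phi_pos : forall r, R0 < r -> 0 < phi r)
  (phi_nd : forall r1 r2, R0 < r1 -> r1 <= r2 -> phi r1 <= phi r2)
  (phi_unb : forall M : R, exists r, R0 < r /\ M < phi r)
  (phi_bounds : forall r, R0 < r -> ln r <= phi r /\ phi r <= r)
  (* standing assumptions on s *)
  (s_pos : forall r, R0 < r -> 0 < s r)
  (s_nd : forall r1 r2, R0 < r1 -> r1 <= r2 -> s r1 <= s r2)
  (s_bounds : forall r, R0 < r -> r < s r /\ s r <= r ^+ 2)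
  (s_liminf : exists c : R, 1 < c /\ \forall r \near +oo, c <= s r / r)
  (* the sequence *)
  (z_nz : forall n, z n != 0)
  (z_inf : (fun n => cabs (z n)) @ \oo --> +oo)
  (z_exp : (exp_conv z < 1%:E)%E)
  (hlambda0 : 0 <= lambda)
  (hlambda : f_exp_conv phi R0 z = lambda%:E)
  (* differentiability *)
  (phi_der : forall r, R0 < r -> derivable phi r 1)
  (s_der : forall r, R0 < r -> derivable s r 1)
  (s_cond : exists M : R,
      \forall r \near +oo, r ^+ 2 * derive1 s r / (s r) ^+ 2 <= M)
  (ratio_cond :
      (exists c : R, (c%:E < inv_ext lambda)%E /\
         \forall r \near +oo, growth_ratio phi s r <= c)
   \/ (forall c : R, (c%:E < inv_ext lambda)%E ->
         \forall r \near +oo, c <= growth_ratio phi s r))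
  (eps : R) (heps : 0 < eps) :
  exists C : R, exists R1 : R, forall w : Cx R,
    R1 <= cabs w ->
    (forall n, cabs (z n) `^ (- (lambda + eps)) < cabs (w - z n)) ->
    `| ln ((cabs (canon_prod z w))^-1) |
      <= C * (phi (s (cabs w)) `^ (lambda + eps) * ln (cabs w)).
Proof.
have [m [m0 zm]] := @min_bound R z z_nz z_inf.
have zi := @zinv_cvg R z m z_nz m0 zm z_exp.
have s_gt : forall r, R0 < r -> r < s r by move=> r hr; case: (s_bounds r hr).
have WOK : @WeightsOK R phi s z (lambda + eps).
  case: ratio_cond => [HA|HB].
  - exact: (@weightsA R R0 phi s z lambda eps hR0 phi_pos phi_nd phi_bounds s_gt phi_der s_der z_inf hlambda0 hlambda heps HA).
  - exact: (@weightsB R R0 phi s z lambda eps hR0 phi_pos s_gt phi_der s_der z_nz z_exp hlambda0 heps HB).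
case: WOK => G [v [C' [a' [v0 cv C'0 hG]]]].
have al0 : 0 <= lambda + eps by rewrite addr_ge0 // ltW.
set K0 := 2 * (lambda + eps + 1) + 1 + ln (1 + m^-1).
have K00 : 0 <= K0.
  have : 0 <= ln (1 + m^-1) by apply: ln_ge0; rewrite lerDl invr_ge0 ltW.
  rewrite /K0; lra.
set S := limn (series v).
have S0 : 0 <= S.
  have := @nondecreasing_cvgn_le _ (series v) _ cv 0%N.
  rewrite /series /= big_geq //; apply.
  apply: nondecreasing_series => n _ _; exact: v0.
exists (K0 * C' * S), (Num.max a' (expR 1)) => w hw hdisc.
have hwa : a' <= cabs w by apply: le_trans hw; rewrite le_max lexx.
have hwe : expR 1 <= cabs w by apply: le_trans hw; rewrite le_max lexx orbT.
have r2 : 2 <= cabs w := le_trans (expR1_ge2 R) hwe.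
have lr1 : 1 <= ln (cabs w).
  by rewrite -ler_expR lnK ?posrE // (lt_le_trans _ r2).
case: (hG _ hwa) => G0 GC hn hf.
have h := @canon_prod_bound R z m (lambda + eps) (G (cabs w)) v w z_nz m0 zm zi al0 r2 lr1 hdisc G0 v0 cv hn hf.
apply: le_trans h _.
rewrite -/K0 -/S.
set L := ln (cabs w). set P := phi (s (cabs w)) `^ (lambda + eps).
have L0 : 0 <= L by apply: le_trans lr1.
have : K0 * L * G (cabs w) * S <= K0 * L * (C' * P) * S.
  rewrite ler_wpM2r // ler_wpM2l // mulr_ge0 //.
have -> : K0 * C' * S * (P * L) = K0 * L * (C' * P) * S by ring.
done.
Qed.
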